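(* Let $f:\mathbb{R}^n\to\mathbb{R}$ be twice continuously differentiable with $\nabla^2 f$ Lipschitz continuous with constant $L$. Let $x\in\mathbb{R}^n$, let $y^1,\dots,y^p\in\mathbb{R}^n$, let $v\in\mathbb{R}^n$ and $w=\nabla^2 f(x)v$, and suppose $p+n=\frac{n^2+n}{2}$. Parametrize a symmetric matrix $H=(h_{ij})$ by the vector $\alpha\in\mathbb{R}^{n(n+1)/2}$ of its entries $h_{ij}$, $i\le j$ (the coefficients of $\tfrac12 s^\top H s$ in the monomial basis $\{\tfrac12 s_i^2\}_{i}\cup\{s_is_j\}_{i<j}$). Let $M=\begin{bmatrix}M^1\\ M^2\end{bmatrix}$ be the square matrix of the linear map $\alpha\mapsto\big(\tfrac12 (y^1-x)^\top H(y^1-x),\dots,\tfrac12 (y^p-x)^\top H(y^p-x),\,Hv\big)$, where $M^1$ consists of the first $p$ rows and $M^2$ of the last $n$ rows, and let $$\delta=\begin{bmatrix}\big(f(y^\ell)-f(x)-\nabla f(x)^\top(y^\ell-x)\big)_{\ell=1,\dots,p}\\ w\end{bmatrix}.$$ Assume $M$ is nonsingular and let $H$ be the symmetric matrix whose parameter vector $\alpha$ solves $M\alpha=\delta$. Let $\Delta_y=\max_{1\le\ell\le p}\|y^\ell-x\|$ and let $\hat M=\begin{bmatrix}M^1/\Delta_y^2\\ M^2\end{bmatrix}$ (assumed nonsingular). Then $$\|H-\nabla^2 f(x)\|=\mathcal{O}(\Delta_y),$$ i.e. $\|H-\nabla^2 f(x)\|\le \kappa\,\Delta_y$ where the constant $\kappa$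 depends only on $L$, the dimensions, and $\|\hat M^{-1}\|$. (Thus $H$ together with $\nabla f(x)$ gives a fully quadratic model.)
   Context: $\mathcal{O}(A)$ denotes a constant times $A$, where the constant is independent of $A$. Norms are Euclidean (spectral for matrices). *)

(* Defs.v *)
From HB Require Import structures.
From mathcomp Require Import all_boot all_order all_algebra.
From mathcomp Require Import all_classical all_reals all_analysis.
Set Implicit Arguments. Unset Strict Implicit. Unset Printing Implicit Defensive.
Import Order.TTheory GRing.Theory Num.Theory.
Import numFieldNormedType.Exports.
Local Open Scope classical_set_scope.
Local Open Scope ring_scope.

Definition vnorm {R : realType} {k : nat} (u : 'cV[R]_k) : R :=
  Num.sqrt (\sum_(i < k) u i 0 ^+ 2).

Definition specnorm {R : realType} {m k : nat} (A : 'M[R]_(m, k)) : R :=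
  sup [set vnorm (A *m u) | u in [set u : 'cV[R]_k | vnorm u <= 1]].

Definition pairT (n : nat) := {ij : 'I_n * 'I_n | (ij.1 <= ij.2)%N}.

Definition npar (n : nat) : nat := #|{: pairT n}|.

Definition pidx (n : nat) (k : 'I_(npar n)) : 'I_n * 'I_n :=
  val (@enum_val (pairT n) (mem predT) k).

(* symmetric matrix H with h_ij = h_ji = alpha_(min i j, max i j) *)
Definition Hof {R : realType} {n : nat} (alpha : 'cV[R]_(npar n)) : 'M[R]_n :=
  \matrix_(i < n, j < n)
     \sum_(k < npar n | (pidx k == (i, j)) || (pidx k == (j, i))) alpha k 0.

Definition Lmap {R : realType} {n p : nat} (x : 'rV[R]_n) (y : 'I_p -> 'rV[R]_n)
  (v : 'rV[R]_n) (alpha : 'cV[R]_(npar n)) : 'cV[R]_(p + n) :=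
  col_mx (\col_(l < p) (2^-1 * (((y l - x) *m Hof alpha *m (y l - x)^T) 0 0)))
         (Hof alpha *m v^T).

Definition Mmat {R : realType} {n p : nat} (x : 'rV[R]_n) (y : 'I_p -> 'rV[R]_n)
  (v : 'rV[R]_n) : 'M[R]_(p + n, npar n) :=
  \matrix_(r, k) Lmap x y v (delta_mx k 0) r 0.

Definition Deltay {R : realType} {n p : nat} (x : 'rV[R]_n) (y : 'I_p -> 'rV[R]_n) : R :=
  \big[Num.max/0]_(l < p) vnorm (y l - x)^T.

Definition Mhat {R : realType} {n p : nat} (x : 'rV[R]_n) (y : 'I_p -> 'rV[R]_n)
  (v : 'rV[R]_n) : 'M[R]_(p + n, npar n) :=
  col_mx ((Deltay x y ^+ 2)^-1 *: usubmx (Mmat x y v)) (dsubmx (Mmat x y v)).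

Definition rhs {R : realType} {n p : nat} (f : 'rV[R]_n -> R) (g : 'rV[R]_n -> 'rV[R]_n)
  (Hs : 'rV[R]_n -> 'M[R]_n) (x : 'rV[R]_n) (y : 'I_p -> 'rV[R]_n) (v : 'rV[R]_n)
  : 'cV[R]_(p + n) :=
  col_mx (\col_(l < p) (f (y l) - f x - (g x *m (y l - x)^T) 0 0))
         (Hs x *m v^T).

(* Main.v *)
Require Import Defs.
From HB Require Import structures.
From mathcomp Require Import all_boot all_order all_algebra.
From mathcomp Require Import all_classical all_reals all_analysis.
From mathcomp Require Import ring lra.
Set Implicit Arguments. Unset Strict Implicit. Unset Printing Implicit Defensive.
Import Order.TTheory GRing.Theory Num.Theory.
Import numFieldNormedType.Exports.
Local Open Scope classical_set_scope.
Local Open Scope ring_scope.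
Lemma line_derive (R : realType) (V W : normedModType R) (F : V -> W) (z s : V) (t : R) :
  differentiable F (z + t *: s) ->
  is_derive t 1 (fun u : R => F (z + u *: s)) ('d F (z + t *: s) s).
Proof.
move=> dF.
have E : (fun h : R => h^-1 *: (((fun u : R => F (z + u *: s)) \o shift t) (h *: 1) - F (z + t *: s)))
   = (fun h : R => h^-1 *: ((F \o shift (z + t *: s)) (h *: s) - F (z + t *: s))).
  apply/funext => h /=; congr (_ *: (F _ - _)).
  by rewrite /shift /= [h%:A]mulr1 scalerDl addrCA.
split.
  rewrite /derivable E; have := @diff_derivable _ _ _ _ _ s dF; rewrite /derivable; exact.
by rewrite /derive E -deriveE.
Qed.

Lemma is_derive_dotr (R : realType) n (G : R -> 'rV[R]_n) (u : R) (D : 'rV[R]_n) (w : 'rV[R]_n) :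
  is_derive u 1 G D -> is_derive u 1 (fun t => (G t *m w^T) 0 0) ((D *m w^T) 0 0).
Proof.
move=> hG.
have hc j : is_derive u 1 (fun t => G t 0 j) (D 0 j).
  case: hG => dG DG; split; first by move/derivable_mxP: dG; apply.
  by have := derive_mx dG; rewrite DG => ->; rewrite mxE.
have -> : (fun t => (G t *m w^T) 0 0) = \sum_(j < n) (w 0 j *: (fun t => G t 0 j)).
  rewrite fct_sumE; apply/funext => t; rewrite mxE; apply: eq_bigr => j _.
  by rewrite mxE mulrC.
rewrite mxE.
have -> : \sum_j D 0 j * w^T j 0 = \sum_(j < n) (w 0 j *: D 0 j).
  by apply: eq_bigr => j _; rewrite mxE mulrC.
apply: is_derive_sum => j; exact: is_deriveZ.
Qed.

Lemma is_derive_lin (R : realType) (u q : R) : is_derive u 1 (fun t : R => t * q) q.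
Proof.
have -> : (fun t : R => t * q) = q *: (@id R).
  by apply/funext => t /=; rewrite /GRing.scale /= mulrC.
have := @is_deriveZ R R R id q u 1 1 (is_derive_id _ _).
by rewrite /GRing.scale /= mulr1.
Qed.

Lemma is_derive_sq (R : realType) (u q : R) : is_derive u 1 (fun t : R => t ^+ 2 * q) (2 * u * q).
Proof.
have H := (@is_deriveM R R id (fun t => t * q) u 1 1 q (is_derive_id _ _) (is_derive_lin u q)).
have E : (fun t : R => t ^+ 2 * q) = (@id R) * (fun t => t * q).
  by apply/funext => t /=; rewrite expr2 mulrA.
have eq : u *: q + (u * q)%:A = 2 * u * q.
  rewrite /GRing.scale /= mulr1; lra.
rewrite E; exact: (is_derive_eq H eq).
Qed.
Section Norms.
Variable R : realType.

Lemma vnorm_ge0 k (u : 'cV[R]_k) : 0 <= vnorm u.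
Proof. exact: sqrtr_ge0. Qed.

Lemma sumsq_le_sqsum (I : Type) (r : seq I) (P : pred I) (F : I -> R) :
  (forall i, P i -> 0 <= F i) ->
  \sum_(i <- r | P i) F i ^+ 2 <= (\sum_(i <- r | P i) F i) ^+ 2 /\ 0 <= \sum_(i <- r | P i) F i.
Proof.
move=> F0; apply: (big_rec2 (fun a b => a <= b ^+ 2 /\ 0 <= b)).
  by rewrite expr0n /=; split.
move=> i a b Pi [h1 h2]; have := F0 i Pi => h3; split; last by lra.
nra.
Qed.

Lemma vnorm_le_sum k (u : 'cV[R]_k) : vnorm u <= \sum_i `|u i 0|.
Proof.
have s0 : 0 <= \sum_i `|u i 0| by apply: sumr_ge0 => i _; exact: normr_ge0.
rewrite /vnorm -(ger0_norm s0) -sqrtr_sqr.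
rewrite ler_sqrt; last exact: sqr_ge0.
have [h _] := @sumsq_le_sqsum _ (index_enum 'I_k) xpredT (fun i => `|u i 0|) (fun i _ => normr_ge0 _).
by apply: le_trans h; apply: ler_sum => i _; rewrite real_normK ?num_real.
Qed.

Lemma coord_le_vnorm k (u : 'cV[R]_k) i : `|u i 0| <= vnorm u.
Proof.
rewrite -sqrtr_sqr ler_sqrt; last by apply: sumr_ge0 => j _; exact: sqr_ge0.
rewrite (bigD1 i) //= lerDl sumr_ge0 // => j _; exact: sqr_ge0.
Qed.

Lemma vnorm_mul_bound m k (A : 'M[R]_(m, k)) u : vnorm u <= 1 ->
  vnorm (A *m u) <= \sum_i \sum_j `|A i j|.
Proof.
move=> hu; apply: le_trans (vnorm_le_sum _) _; apply: ler_sum => i _.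
rewrite mxE; apply: le_trans (ler_norm_sum _ _ _) _; apply: ler_sum => j _.
rewrite normrM -[leRHS]mulr1 ler_wpM2l //.
exact: le_trans (coord_le_vnorm _ _) hu.
Qed.

Lemma has_sup_spec m k (A : 'M[R]_(m, k)) :
  has_sup [set vnorm (A *m u) | u in [set u : 'cV[R]_k | vnorm u <= 1]].
Proof.
split.
  exists (vnorm (A *m 0)), 0 => //=.
  by rewrite /vnorm big1 ?sqrtr0 // => i _; rewrite mxE expr0n.
exists (\sum_i \sum_j `|A i j|) => _ [u hu <-]; exact: vnorm_mul_bound.
Qed.

Lemma specnorm_ge0 m k (A : 'M[R]_(m, k)) : 0 <= specnorm A.
Proof.
apply: le_trans (vnorm_ge0 (A *m 0)) _.
apply: sup_upper_bound (has_sup_spec A) _ _; exists 0 => //=.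
by rewrite /vnorm big1 ?sqrtr0 // => i _; rewrite mxE expr0n.
Qed.

Lemma specnorm_le_sum m k (A : 'M[R]_(m, k)) : specnorm A <= \sum_i \sum_j `|A i j|.
Proof.
apply: ge_sup; first by case: (has_sup_spec A).
move=> _ [u hu <-]; exact: vnorm_mul_bound.
Qed.

Lemma vnormZ k (c : R) (u : 'cV[R]_k) : vnorm (c *: u) = `|c| * vnorm u.
Proof.
rewrite /vnorm -sqrtr_sqr -sqrtrM ?sqr_ge0 // mulr_sumr; congr Num.sqrt.
by apply: eq_bigr => i _; rewrite mxE exprMn.
Qed.

Lemma vnorm_eq0 k (u : 'cV[R]_k) : vnorm u = 0 -> u = 0.
Proof.
move=> h; apply/matrixP => i j; rewrite (ord1 j) mxE.
by apply/normr0_eq0/eqP; rewrite eq_le normr_ge0 andbT -h coord_le_vnorm.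
Qed.

Lemma specnorm_bound m k (A : 'M[R]_(m, k)) u : vnorm (A *m u) <= specnorm A * vnorm u.
Proof.
have [h0|hp] := eqVneq (vnorm u) 0.
  by rewrite h0 (vnorm_eq0 h0) mulmx0 mulr0 /vnorm big1 ?sqrtr0 // => i _; rewrite mxE expr0n.
have up : 0 < vnorm u by rewrite lt_def hp vnorm_ge0.
have h : vnorm (A *m ((vnorm u)^-1 *: u)) <= specnorm A.
  apply: sup_upper_bound (has_sup_spec A) _ _; exists ((vnorm u)^-1 *: u) => //=.
  by rewrite vnormZ ger0_norm ?invr_ge0 ?vnorm_ge0 // mulVf.
move: h; rewrite -scalemxAr vnormZ ger0_norm ?invr_ge0 ?vnorm_ge0 //.
by rewrite ler_pdivrMl // mulrC.
Qed.
End Norms.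

Definition rn {R : realType} {n} (a : 'rV[R]_n) := vnorm a^T.

Lemma rn_ge0 (R : realType) n (a : 'rV[R]_n) : 0 <= rn a.
Proof. exact: vnorm_ge0. Qed.

Lemma dot_bound (R : realType) n (a b : 'rV[R]_n) :
  `|(a *m b^T) 0 0| <= n%:R * rn a * rn b.
Proof.
rewrite mxE; apply: le_trans (ler_norm_sum _ _ _) _.
apply: le_trans (_ : \sum_(j < n) rn a * rn b <= _).
  apply: ler_sum => j _; rewrite normrM; apply: ler_pM => //.
    by have := coord_le_vnorm a^T j; rewrite mxE.
  by have := coord_le_vnorm b^T j; rewrite !mxE.
by rewrite sumr_const card_ord -mulrA mulr_natl.
Qed.

Lemma quad_bound (R : realType) n (w s : 'rV[R]_n) (A : 'M[R]_n) :
  `|(w *m A *m s^T) 0 0| <= n%:R * rn w * specnorm A * rn s.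
Proof.
have -> : w *m A *m s^T = w *m ((A *m s^T)^T)^T by rewrite trmxK mulmxA.
apply: le_trans (dot_bound _ _) _.
have h : rn ((A *m s^T)^T) <= specnorm A * rn s by rewrite /rn trmxK specnorm_bound.
have := ler_wpM2l (mulr_ge0 (ler0n R n) (rn_ge0 w)) h.
by rewrite mulrA.
Qed.

Lemma quad_tr (R : realType) n (w s : 'rV[R]_n) (B : 'M[R]_n) :
  (s *m B^T *m w^T) 0 0 = (w *m B *m s^T) 0 0.
Proof.
have h (M : 'M[R]_1) : M 0 0 = M^T 0 0 by rewrite mxE.
by rewrite [LHS]h !trmx_mul !trmxK mulmxA.
Qed.

Lemma gradA (R : realType) n (g : 'rV[R]_n -> 'rV[R]_n) (Hs : 'rV[R]_n -> 'M[R]_n) (L : R) :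
 (forall z, differentiable g z) -> (forall z h, 'd g z h = (Hs z *m h^T)^T) ->
 (forall a b, specnorm (Hs a - Hs b) <= L * vnorm (a - b)^T) ->
 forall z s w, `|(g (z + s) *m w^T) 0 0 - (g z *m w^T) 0 0 - (s *m (Hs z)^T *m w^T) 0 0|
   <= n%:R * `|L| * rn s ^+ 2 * rn w.
Proof.
move=> dg dgE Lip z s w.
set q := (s *m (Hs z)^T *m w^T) 0 0.
pose th := fun u : R => (g (z + u *: s) *m w^T) 0 0 - u * q.
pose dth := fun u : R => (s *m (Hs (z + u *: s))^T *m w^T) 0 0 - q.
have hd (u : R) : is_derive u 1 th (dth u).
  have h1 := line_derive (dg (z + u *: s)).
  rewrite dgE trmx_mul trmxK in h1.
  exact: (is_deriveB (is_derive_dotr w h1) (is_derive_lin u q)).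
have cont : {within `[0, 1], continuous th}.
  apply: derivable_within_continuous => u _; exact: (hd u).(ex_derive).
have [c c01 E] := MVT ltr01 (fun x _ => hd x) cont.
move: E; rewrite /th /dth scale1r scale0r addr0 mul1r mul0r subr0 subr0 mulr1.
rewrite addrAC => ->.
have -> : (s *m (Hs (z + c *: s))^T *m w^T) 0 0 - q
   = (s *m (Hs (z + c *: s) - Hs z)^T *m w^T) 0 0.
  by rewrite /q linearB /= mulmxBr mulmxBl [in RHS]mxE [X in _ = _ + X]mxE.
rewrite quad_tr.
have c0 : 0 < c by move: c01; rewrite in_itv /= => /andP[].
have c1 : c < 1 by move: c01; rewrite in_itv /= => /andP[].
have hs : specnorm (Hs (z + c *: s) - Hs z) <= `|L| * rn s.
  apply: le_trans (Lip _ _) _.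
  rewrite addrAC subrr add0r linearZ /= vnormZ gtr0_norm //.
  have := rn_ge0 s; rewrite /rn => h.
  have := specnorm_ge0 (Hs (z + c *: s) - Hs z) => h2.
  have hL : L <= `|L| := ler_norm L.
  have hL0 : 0 <= `|L| := normr_ge0 L.
  have t1 : 0 <= (`|L| - L) * (c * vnorm s^T).
    by apply: mulr_ge0; [lra | apply: mulr_ge0; lra].
  have t2 : 0 <= `|L| * vnorm s^T * (1 - c).
    by apply: mulr_ge0; [apply: mulr_ge0 | lra].
  nra.
apply: le_trans; first exact: quad_bound.
have := rn_ge0 s; have := rn_ge0 w; have := specnorm_ge0 (Hs (z + c *: s) - Hs z).
have : 0 <= n%:R :> R := ler0n _ _.
move: hs; set S := specnorm _; set a := rn s; set b := rn w; set N := (n%:R : R).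
move=> hs h1 h2 h3 h4.
have : N * b * S * a <= N * b * (`|L| * a) * a.
  by rewrite ler_wpM2r // ler_wpM2l // mulr_ge0.
move=> h5; apply: le_trans h5 _; rewrite le_eqVlt; apply/orP; left; apply/eqP.
by rewrite expr2; ring.
Qed.

Lemma rnZ (R : realType) n (c : R) (s : 'rV[R]_n) : rn (c *: s) = `|c| * rn s.
Proof. by rewrite /rn linearZ /= vnormZ. Qed.

Lemma specLip (R : realType) n (Hs : 'rV[R]_n -> 'M[R]_n) (L : R) :
 (forall a b, specnorm (Hs a - Hs b) <= L * vnorm (a - b)^T) ->
 forall z s (c : R), 0 <= c <= 1 -> specnorm (Hs (z + c *: s) - Hs z) <= `|L| * rn s.
Proof.
move=> Lip z s c /andP[c0 c1].
apply: le_trans (Lip _ _) _.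
rewrite addrAC subrr add0r.
have := rnZ c s; rewrite /rn => ->; rewrite ger0_norm //.
have h := rn_ge0 s; rewrite /rn in h.
have h2 := specnorm_ge0 (Hs (z + c *: s) - Hs z).
have hL : L <= `|L| := ler_norm L.
have hL0 : 0 <= `|L| := normr_ge0 L.
have t1 : 0 <= (`|L| - L) * (c * vnorm s^T).
  by apply: mulr_ge0; [lra | apply: mulr_ge0; lra].
have t2 : 0 <= `|L| * vnorm s^T * (1 - c).
  by apply: mulr_ge0; [apply: mulr_ge0 | lra].
nra.
Qed.

Lemma fB (R : realType) n (f : 'rV[R]_n -> R) (g : 'rV[R]_n -> 'rV[R]_n)
  (Hs : 'rV[R]_n -> 'M[R]_n) (L : R) :
 (forall z, differentiable f z) -> (forall z h, 'd f z h = (g z *m h^T) 0 0) ->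
 (forall z, differentiable g z) -> (forall z h, 'd g z h = (Hs z *m h^T)^T) ->
 (forall a b, specnorm (Hs a - Hs b) <= L * vnorm (a - b)^T) ->
 forall z s, `|f (z + s) - f z - (g z *m s^T) 0 0 - 2^-1 * (s *m (Hs z)^T *m s^T) 0 0|
   <= n%:R * `|L| * rn s ^+ 3.
Proof.
move=> df dfE dg dgE Lip z s.
set a := (g z *m s^T) 0 0; set q := (s *m (Hs z)^T *m s^T) 0 0.
pose ps := fun t : R => f (z + t *: s) - t * a - t ^+ 2 * (2^-1 * q).
pose dps := fun t : R => (g (z + t *: s) *m s^T) 0 0 - a - 2 * t * (2^-1 * q).
have hd (t : R) : is_derive t 1 ps (dps t).
  have h1 := line_derive (df (z + t *: s)).
  rewrite dfE in h1.
  exact: (is_deriveB (is_deriveB h1 (is_derive_lin t a)) (is_derive_sq t (2^-1 * q))).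
have cont : {within `[0, 1], continuous ps}.
  apply: derivable_within_continuous => u _; exact: (hd u).(ex_derive).
have [c c01 E] := MVT ltr01 (fun x _ => hd x) cont.
move: E; rewrite /ps /dps scale1r scale0r addr0 mul1r mul0r subr0 expr1n mul1r.
rewrite expr0n /= mul0r subr0 subr0 mulr1 => E.
have -> : f (z + s) - f z - a - 2^-1 * q = f (z + s) - a - 2^-1 * q - f z by ring.
rewrite E.
have c0 : 0 < c by move: c01; rewrite in_itv /= => /andP[].
have c1 : c < 1 by move: c01; rewrite in_itv /= => /andP[].
have hA := gradA dg dgE Lip z (c *: s) s.
have sc (M : 'M[R]_1) : (c *: M) 0 0 = c * M 0 0 by rewrite mxE.
move: hA; rewrite -scalemxAl -scalemxAl sc rnZ (gtr0_norm c0) -/q -/a => hA.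
have -> : (g (z + c *: s) *m s^T) 0 0 - a - 2 * c * (2^-1 * q)
   = (g (z + c *: s) *m s^T) 0 0 - a - c * q.
  by congr (_ - _); rewrite mulrCA mulrA mulrCA mulrA mulfV ?mul1r // pnatr_eq0.
apply: le_trans hA _.
have h := rn_ge0 s; have hL0 : 0 <= `|L| := normr_ge0 L.
have hN : 0 <= n%:R :> R := ler0n _ _.
set N := (n%:R : R); set b := rn s.
have : 0 <= N * `|L| * b ^+ 3 * (1 - c ^+ 2).
  apply: mulr_ge0; first by rewrite !mulr_ge0 // exprn_ge0.
  nra.
move=> t; rewrite -subr_ge0; apply: le_trans t _; rewrite le_eqVlt; apply/orP; left.
by apply/eqP; ring.
Qed.

Lemma delta_quad (R : realType) n (A : 'M[R]_n) (e : R) i j :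
  ((e *: @delta_mx R 1 n 0 i) *m A *m (e *: @delta_mx R 1 n 0 j)^T) 0 0 = e ^+ 2 * A i j.
Proof.
rewrite linearZ /= -scalemxAl -scalemxAl -scalemxAr mxE mxE -rowE trmx_delta -colE.
by rewrite !mxE mulrA expr2.
Qed.

Lemma rn_delta (R : realType) n (e : R) (i : 'I_n) : 0 <= e -> rn (e *: @delta_mx R 1 n 0 i) <= e.
Proof.
move=> e0; rewrite rnZ ger0_norm //.
apply: le_trans (_ : e * 1 <= _); last by rewrite mulr1.
apply: ler_wpM2l => //; apply: le_trans (vnorm_le_sum _) _.
rewrite (bigD1 i) //= big1 => [|k ki]; last by rewrite !mxE (negbTE ki) /= normr0.
by rewrite !mxE !eqxx normr1 addr0.
Qed.

Lemma Delta_est (R : realType) n (f : 'rV[R]_n -> R) (g : 'rV[R]_n -> 'rV[R]_n)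
  (Hs : 'rV[R]_n -> 'M[R]_n) (L : R) :
 (forall z, differentiable f z) -> (forall z h, 'd f z h = (g z *m h^T) 0 0) ->
 (forall z, differentiable g z) -> (forall z h, 'd g z h = (Hs z *m h^T)^T) ->
 (forall a b, specnorm (Hs a - Hs b) <= L * vnorm (a - b)^T) ->
 forall z h k, `|f (z + h + k) - f (z + h) - f (z + k) + f z - (h *m Hs z *m k^T) 0 0|
   <= n%:R * `|L| * (rn k ^+ 2 * rn h + rn h ^+ 2 * rn k).
Proof.
move=> df dfE dg dgE Lip z h k.
pose ph := fun t : R => f (z + k + t *: h) - f (z + t *: h).
pose dph := fun t : R => (g (z + k + t *: h) *m h^T) 0 0 - (g (z + t *: h) *m h^T) 0 0.
have hd (t : R) : is_derive t 1 ph (dph t).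
  have h1 := line_derive (df (z + k + t *: h)).
  have h2 := line_derive (df (z + t *: h)).
  rewrite dfE in h1; rewrite dfE in h2.
  exact: (is_deriveB h1 h2).
have cont : {within `[0, 1], continuous ph}.
  apply: derivable_within_continuous => u _; exact: (hd u).(ex_derive).
have [c c01 E] := MVT ltr01 (fun x _ => hd x) cont.
move: E; rewrite /ph /dph scale1r scale0r !addr0 subr0 mulr1 => E.
have -> : f (z + h + k) - f (z + h) - f (z + k) + f z
    = f (z + k + h) - f (z + h) - (f (z + k) - f z) by rewrite [z + h + k]addrAC; ring.
rewrite E.
have c0 : 0 <= c by move: c01; rewrite in_itv /= => /andP[/ltW].
have c1 : c <= 1 by move: c01; rewrite in_itv /= => /andP[_ /ltW].
have hA := gradA dg dgE Lip (z + c *: h) k h.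
have hS := specLip Lip z h (c := c) (introT andP (conj c0 c1)).
have hQ := quad_bound h k (Hs (z + c *: h) - Hs z).
rewrite quad_tr in hA.
have -> : (g (z + k + c *: h) *m h^T) 0 0 - (g (z + c *: h) *m h^T) 0 0 - (h *m Hs z *m k^T) 0 0
  = ((g (z + c *: h + k) *m h^T) 0 0 - (g (z + c *: h) *m h^T) 0 0 - (h *m Hs (z + c *: h) *m k^T) 0 0)
    + (h *m (Hs (z + c *: h) - Hs z) *m k^T) 0 0.
  rewrite mulmxBr mulmxBl [X in _ = _ + X]mxE [X in _ = _ + (_ + X)]mxE addrAC.
  by rewrite [z + k + _]addrAC; ring.
apply: le_trans (ler_normD _ _) _.
have hn : 0 <= n%:R :> R := ler0n _ _.
have hh := rn_ge0 h; have hk := rn_ge0 k; have hL0 : 0 <= `|L| := normr_ge0 L.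
have hsp := specnorm_ge0 (Hs (z + c *: h) - Hs z).
set N := (n%:R : R) in hA hQ hn *; set a := rn h in hA hQ hS hh *; set b := rn k in hA hQ hh hk *.
set S := specnorm _ in hS hQ hsp *.
have hQ' : N * a * S * b <= N * a * (`|L| * a) * b.
  by rewrite ler_wpM2r // ler_wpM2l // mulr_ge0.
have : `|(h *m (Hs (z + c *: h) - Hs z) *m k^T) 0 0| <= N * `|L| * (a ^+ 2 * b).
  apply: le_trans hQ _; apply: le_trans hQ' _; rewrite le_eqVlt; apply/orP; left.
  by apply/eqP; rewrite expr2; ring.
move=> hQ2.
have := lerD hA hQ2; move=> hsum; apply: le_trans hsum _; rewrite le_eqVlt; apply/orP; left.
by apply/eqP; ring.
Qed.

Lemma cubic_le (R : realType) (a b e : R) : 0 <= a <= e -> 0 <= b <= e ->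
  b ^+ 2 * a + a ^+ 2 * b <= 2 * e ^+ 3.
Proof.
move=> /andP[a0 ae] /andP[b0 be].
have h1 : b ^+ 2 <= e ^+ 2 by rewrite ler_pXn2r // ?nnegrE //; lra.
have h2 : a ^+ 2 <= e ^+ 2 by rewrite ler_pXn2r // ?nnegrE //; lra.
have h3 : b ^+ 2 * a <= e ^+ 2 * e by apply: ler_pM => //; exact: exprn_ge0.
have h4 : a ^+ 2 * b <= e ^+ 2 * e by apply: ler_pM => //; exact: exprn_ge0.
have -> : 2 * e ^+ 3 = e ^+ 2 * e + e ^+ 2 * e by rewrite -exprSr; ring.
exact: lerD.
Qed.

Lemma Hsym (R : realType) n (f : 'rV[R]_n -> R) (g : 'rV[R]_n -> 'rV[R]_n)
  (Hs : 'rV[R]_n -> 'M[R]_n) (L : R) :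
 (forall z, differentiable f z) -> (forall z h, 'd f z h = (g z *m h^T) 0 0) ->
 (forall z, differentiable g z) -> (forall z h, 'd g z h = (Hs z *m h^T)^T) ->
 (forall a b, specnorm (Hs a - Hs b) <= L * vnorm (a - b)^T) ->
 forall z i j, Hs z i j = Hs z j i.
Proof.
move=> df dfE dg dgE Lip z i j.
set d := Hs z i j - Hs z j i.
set C := 4 * (n%:R * `|L|).
have hC : 0 <= C by rewrite mulr_ge0 // mulr_ge0 // ler0n.
have key (e : R) : 0 < e -> `|d| <= C * e.
  move=> e0.
  set h := e *: @delta_mx R 1 n 0 i; set k := e *: @delta_mx R 1 n 0 j.
  have H1 := Delta_est df dfE dg dgE Lip z h k.
  have H2 := Delta_est df dfE dg dgE Lip z k h.
  rewrite /h /k !delta_quad -/h -/k in H1 H2.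
  have ha : 0 <= rn h <= e by rewrite rn_ge0 rn_delta // ltW.
  have hb : 0 <= rn k <= e by rewrite rn_ge0 rn_delta // ltW.
  have hE := cubic_le ha hb.
  have hE' := cubic_le hb ha.
  have hN : 0 <= n%:R * `|L| by rewrite mulr_ge0 // ler0n.
  have eD : f (z + k + h) - f (z + k) - f (z + h) + f z = f (z + h + k) - f (z + h) - f (z + k) + f z.
    by rewrite [z + k + h]addrAC; ring.
  rewrite eD in H2.
  move: H1 H2; set D := (f (z + h + k) - f (z + h) - f (z + k) + f z) => H1 H2.
  have H1' := le_trans H1 (ler_wpM2l hN hE).
  have H2' := le_trans H2 (ler_wpM2l hN hE').
  have : `|e ^+ 2 * d| <= 4 * (n%:R * `|L|) * e ^+ 3.
    have -> : e ^+ 2 * d = (D - e ^+ 2 * Hs z j i) - (D - e ^+ 2 * Hs z i j) by rewrite /d; ring.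
    apply: le_trans (ler_normB _ _) _.
    have := lerD H2' H1'; move=> hs; apply: le_trans hs _; rewrite le_eqVlt; apply/orP; left.
    by apply/eqP; ring.
  move=> hh; have e2 : 0 < e ^+ 2 by rewrite exprn_gt0.
  rewrite normrM (ger0_norm (ltW e2)) -/C in hh.
  rewrite -(ler_pM2l e2); apply: le_trans hh _; rewrite le_eqVlt; apply/orP; left.
  by apply/eqP; rewrite exprSr; ring.
apply/eqP; rewrite -subr_eq0 -/d -normr_eq0; apply/eqP.
apply/le_anti/andP; split; last exact: normr_ge0.
have hd0 := normr_ge0 d.
rewrite leNgt; apply/negP => dpos.
have hk := key (`|d| / (C + 1)) (divr_gt0 dpos (ltr_wpDl hC ltr01)).
have C1 : 0 < C + 1 by lra.
move: hk; rewrite mulrA ler_pdivlMr //.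
nra.
Qed.
Lemma Hof_entry (R : realType) n (alpha : 'cV[R]_(npar n)) (i j : 'I_n) (hij : (i <= j)%N) :
  let p : pairT n := exist _ (i, j) hij in
  exists k0 : 'I_(npar n), pidx k0 = (i, j) /\ Hof alpha i j = alpha k0 0.
Proof.
move=> p.
have x0A : p \in (mem (@predT (pairT n))) by [].
pose k0 : 'I_(npar n) := enum_rank_in x0A p.
have pk0 : pidx k0 = (i, j) by rewrite /pidx /k0 enum_rankK_in.
exists k0; split => //.
rewrite mxE.
have -> : \sum_(k < npar n | (pidx k == (i, j)) || (pidx k == (j, i))) alpha k 0
        = \sum_(k < npar n | k == k0) alpha k 0.
  apply: eq_bigl => k; apply/idP/idP; last by move/eqP ->; rewrite pk0 eqxx.
  have kk : forall k, pidx k = (i, j) -> k = k0.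
    move=> k' hk'; rewrite /k0.
    have -> : p = enum_val k' by apply: val_inj; rewrite /= -hk'.
    by rewrite enum_valK_in.
  case/orP => /eqP hk; first by rewrite (kk k hk).
  have := svalP (@enum_val (pairT n) (mem predT) k); rewrite -/(pidx k) hk /= => hji.
  have eij : i = j by apply: val_inj; apply/eqP; rewrite eqn_leq hij hji.
  by rewrite (kk k) // hk eij.
by rewrite big_pred1_eq.
Qed.

Lemma Hof_swap (R : realType) n (alpha : 'cV[R]_(npar n)) (i j : 'I_n) :
  Hof alpha i j = Hof alpha j i.
Proof. by rewrite !mxE; apply: eq_bigl => k; rewrite orbC. Qed.

Lemma Hof_sym (R : realType) n (S : 'M[R]_n) : (forall i j, S i j = S j i) ->
  Hof (\col_k S (pidx k).1 (pidx k).2) = S.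
Proof.
move=> Ssym; apply/matrixP => i j.
have gen : forall i j : 'I_n, (i <= j)%N -> Hof (\col_k S (pidx k).1 (pidx k).2) i j = S i j.
  move=> i' j' hij; have [k0 [pk ->]] := Hof_entry (\col_k S (pidx k).1 (pidx k).2) hij.
  by rewrite mxE pk.
case: (leqP i j) => hij; first exact: gen.
by rewrite Hof_swap gen ?(ltnW hij) // Ssym.
Qed.

Lemma mxE_add (R : realType) m k (M N : 'M[R]_(m, k)) i j : (M + N) i j = M i j + N i j.
Proof. by rewrite mxE. Qed.
Lemma mxE_scale (R : realType) m k (c : R) (M : 'M[R]_(m, k)) i j : (c *: M) i j = c * M i j.
Proof. by rewrite mxE. Qed.
Lemma mxE_col (R : realType) p (F : 'I_p -> R) l k : (\col_(l' < p) F l') l k = F l.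
Proof. by rewrite mxE. Qed.

Lemma Hof_lin (R : realType) n (c : R) (a b : 'cV[R]_(npar n)) :
  Hof (c *: a + b) = c *: Hof a + Hof b.
Proof.
apply/matrixP => i j; rewrite mxE_add mxE_scale !mxE.
under eq_bigr do rewrite mxE_add mxE_scale.
by rewrite big_split /= mulr_sumr.
Qed.

Lemma Lmap_lin (R : realType) n p (x : 'rV[R]_n) (y : 'I_p -> 'rV[R]_n) v (c : R) a b :
  Lmap x y v (c *: a + b) = c *: Lmap x y v a + Lmap x y v b.
Proof.
rewrite /Lmap Hof_lin scale_col_mx add_col_mx; congr col_mx.
  apply/matrixP => l k.
  rewrite mxE_add mxE_scale !mxE_col.
  rewrite mulmxDr mulmxDl -scalemxAr -scalemxAl mxE_add mxE_scale.
  by rewrite mulrDr mulrCA.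
by rewrite mulmxDl scalemxAl.
Qed.

Section LmapFacts.
Context (R : realType) (n p : nat) (x : 'rV[R]_n) (y : 'I_p -> 'rV[R]_n) (v : 'rV[R]_n).

Lemma Lmap0 : Lmap x y v 0 = 0.
Proof.
have := Lmap_lin x y v 1 0 0; rewrite !scale1r addr0 => h.
by apply: (addrI (Lmap x y v 0)); rewrite addr0 -h.
Qed.

Lemma LmapD a b : Lmap x y v (a + b) = Lmap x y v a + Lmap x y v b.
Proof. by have := Lmap_lin x y v 1 a b; rewrite !scale1r. Qed.

Lemma LmapZ c a : Lmap x y v (c *: a) = c *: Lmap x y v a.
Proof. by have := Lmap_lin x y v c a 0; rewrite !addr0 Lmap0 addr0. Qed.

Lemma mulmx_entry m k l (A : 'M[R]_(m, k)) (B : 'M[R]_(k, l)) i j :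
  (A *m B) i j = \sum_r A i r * B r j.
Proof. by rewrite mxE. Qed.

Lemma Mmat_entry r k : Mmat x y v r k = Lmap x y v (delta_mx k 0) r 0.
Proof. by rewrite mxE. Qed.

Lemma Mmat_mul a : Mmat x y v *m a = Lmap x y v a.
Proof.
have ea : a = \sum_(k < npar n) a k 0 *: delta_mx k 0.
  by rewrite {1}(matrix_sum_delta a); apply: eq_bigr => k _; rewrite big_ord1.
rewrite [in RHS]ea (big_morph _ LmapD Lmap0).
apply/matrixP => r c; rewrite (ord1 c) summxE mulmx_entry.
apply: eq_bigr => k _; rewrite LmapZ mxE_scale Mmat_entry mulrC.
by [].
Qed.
End LmapFacts.
Lemma sum_cst (R : realType) m (c : R) : \sum_(i < m) c = m%:R * c.
Proof. by rewrite sumr_const card_ord mulr_natl. Qed.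

Lemma sum_sub_le (R : realType) m (P : pred 'I_m) (F : 'I_m -> R) :
  (forall k, 0 <= F k) -> \sum_(k < m | P k) F k <= \sum_(k < m) F k.
Proof.
move=> F0; rewrite big_mkcond /=; apply: ler_sum => k _.
by case: (P k) => //; exact: F0.
Qed.

Lemma specnorm_Hof (R : realType) n (b : 'cV[R]_(npar n)) :
  specnorm (Hof b) <= (n * n * npar n)%:R * vnorm b.
Proof.
apply: le_trans (specnorm_le_sum _) _.
apply: le_trans (_ : \sum_(i < n) \sum_(j < n) (npar n)%:R * vnorm b <= _).
  apply: ler_sum => i _; apply: ler_sum => j _.
  rewrite mxE; apply: le_trans (ler_norm_sum _ _ _) _.
  apply: le_trans; first by apply: sum_sub_le => k; exact: normr_ge0.
  apply: le_trans (_ : \sum_(k < npar n) vnorm b <= _).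
    by apply: ler_sum => k _; exact: coord_le_vnorm.
  by rewrite sum_cst.
rewrite !sum_cst !natrM !mulrA; exact: lexx.
Qed.

Lemma mxE_opp (R : realType) m k (M : 'M[R]_(m, k)) i j : (- M) i j = - M i j.
Proof. by rewrite mxE. Qed.

Unset Implicit Arguments.

Theorem theorem2 (R : realType) (n p : nat) :
  (p + n = (n ^ 2 + n) %/ 2)%N ->
  exists K : R -> R -> R,
  forall (f : 'rV[R]_n -> R) (g : 'rV[R]_n -> 'rV[R]_n) (Hs : 'rV[R]_n -> 'M[R]_n)
         (L : R) (x : 'rV[R]_n) (y : 'I_p -> 'rV[R]_n) (v : 'rV[R]_n)
         (alpha : 'cV[R]_(npar n)) (Mhinv : 'M[R]_(npar n, p + n)),
    (forall z, differentiable f z) ->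
    (forall z h, 'd f z h = (g z *m h^T) 0 0) ->
    (forall z, differentiable g z) ->
    (forall z h, 'd g z h = (Hs z *m h^T)^T) ->
    continuous Hs ->
    (forall a b, specnorm (Hs a - Hs b) <= L * vnorm (a - b)^T) ->
    (exists Minv : 'M[R]_(npar n, p + n),
        Minv *m Mmat x y v = 1%:M /\ Mmat x y v *m Minv = 1%:M) ->
    Mmat x y v *m alpha = rhs f g Hs x y v ->
    Mhinv *m Mhat x y v = 1%:M -> Mhat x y v *m Mhinv = 1%:M ->
    specnorm (Hof alpha - Hs x) <= K L (specnorm Mhinv) * Deltay x y.
Proof.
move=> _.
exists (fun L m => (n * n * npar n * p * n)%:R * `|L| * m).
move=> f g Hs L x y v alpha Mhinv df dfE dg dgE _ Lip _ hM hl hr.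
have sym := Hsym df dfE dg dgE Lip.
pose S := Hs x.
pose a0 := \col_k S (pidx k).1 (pidx k).2.
have HA0 : Hof a0 = S := Hof_sym (sym x).
have ST : S^T = S by apply/matrixP => i j; rewrite mxE /S sym.
pose beta := alpha - a0.
have ebeta : beta = (-1) *: a0 + alpha by rewrite /beta scaleN1r addrC.
have Hb : Hof beta = Hof alpha - S.
  by rewrite ebeta Hof_lin HA0 scaleN1r addrC.
have Lb : Lmap x y v beta = Lmap x y v alpha - Lmap x y v a0.
  by rewrite ebeta Lmap_lin scaleN1r addrC.
set D := Deltay x y.
pose err := \col_(l < p) (f (y l) - f x - (g x *m (y l - x)^T) 0 0
                - 2^-1 * ((y l - x) *m S *m (y l - x)^T) 0 0).
have LbE : Lmap x y v beta = col_mx err 0.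
  rewrite Lb -(Mmat_mul x y v alpha) hM /rhs /Lmap HA0 opp_col_mx add_col_mx subrr.
  congr col_mx; apply/matrixP => l k.
  by rewrite mxE_add mxE_opp !mxE_col.
have Mb : Mhat x y v *m beta = col_mx ((D ^+ 2)^-1 *: err) 0.
  by rewrite /Mhat mul_col_mx -scalemxAl mul_usub_mx mul_dsub_mx Mmat_mul LbE col_mxKu col_mxKd.
have hbeta : beta = Mhinv *m col_mx ((D ^+ 2)^-1 *: err) 0 by rewrite -Mb mulmxA hl mul1mx.
have errb l : `|err l 0| <= n%:R * `|L| * rn (y l - x) ^+ 3.
  rewrite mxE_col; have := fB df dfE dg dgE Lip x (y l - x).
  by rewrite [x + _]addrC subrK -/S ST.
have rD l : rn (y l - x) <= D by rewrite /D /Deltay /rn; exact: le_bigmax.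
have hN : 0 <= n%:R * `|L| by rewrite mulr_ge0 // ler0n.
have errD l : `|(D ^+ 2)^-1 * err l 0| <= n%:R * `|L| * D.
  have r0 := rn_ge0 (y l - x).
  have D0 : 0 <= D := le_trans r0 (rD l).
  have [->|Dn0] := eqVneq D 0.
    by rewrite expr0n /= invr0 mul0r normr0 mulr0.
  have Dp : 0 < D by rewrite lt_def Dn0 D0.
  rewrite normrM ger0_norm ?invr_ge0 ?exprn_ge0 //.
  rewrite ler_pdivrMl ?exprn_gt0 //.
  apply: le_trans (errb l) _.
  have h3 : rn (y l - x) ^+ 3 <= D ^+ 3 by rewrite ler_pXn2r // ?nnegrE.
  have := ler_wpM2l hN h3 => h4; apply: le_trans h4 _.
  rewrite le_eqVlt; apply/orP; left; apply/eqP.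
  by rewrite (_ : 3 = 2 + 1)%N // exprD expr1; ring.
have vb : vnorm (col_mx ((D ^+ 2)^-1 *: err) (0 : 'cV[R]_n))
          <= p%:R * (n%:R * `|L| * D).
  apply: le_trans (vnorm_le_sum _) _.
  rewrite big_split_ord /=.
  rewrite [X in _ + X <= _]big1 => [|i _]; last by rewrite col_mxEd mxE normr0.
  rewrite addr0 -sum_cst; apply: ler_sum => l _.
  by rewrite col_mxEu mxE_scale; exact: errD.
have hvb : vnorm beta <= specnorm Mhinv * (p%:R * (n%:R * `|L| * D)).
  rewrite {1}hbeta; apply: le_trans (specnorm_bound _ _) _.
  apply: ler_wpM2l; [exact: specnorm_ge0 | exact: vb].
rewrite -/S -Hb; apply: le_trans (specnorm_Hof beta) _.
have := ler_wpM2l (ler0n R (n * n * npar n)) hvb => h; apply: le_trans h _.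
rewrite le_eqVlt; apply/orP; left; apply/eqP.
rewrite !natrM; ring.
Qed.
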